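(* Let $n\ge2$, let $a_1,\dots,a_{n+1}\in\mathbb P^n$ be general points, and let $R\subset\mathbb P^n$ be a hyperplane containing none of them. Let $B=\{\langle a_i,a_j\rangle\cap R : 1\le i<j\le n+1\}$, a set of $\binom{n+1}{2}$ points of $R\cong\mathbb P^{n-1}$. Then $B$ imposes independent conditions on quadrics of $R$; equivalently, no quadric hypersurface of $R$ contains $B$.
   Context: $\langle a_i,a_j\rangle$ denotes the line spanned by $a_i$ and $a_j$. *)

(* Defs.v *)
From HB Require Import structures.
From mathcomp Require Import all_boot all_order all_algebra all_field.
Set Implicit Arguments. Unset Strict Implicit. Unset Printing Implicit Defensive.
Import Order.TTheory GRing.Theory Num.Theory.
Local Open Scope ring_scope.

(* Points of P^n are represented by homogeneous coordinate vectors in F^(n+1). *)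

(* The standard bilinear pairing; a hyperplane is {x | dotv x c = 0}, c != 0. *)
Definition dotv (F : fieldType) (m : nat) (x y : 'rV[F]_m) : F :=
  \sum_(k < m) x 0 k * y 0 k.

(* A quadratic form on F^m: every quadratic form is x |-> x A x^T. *)
Definition qform (F : fieldType) (m : nat) (A : 'M[F]_m) (x : 'rV[F]_m) : F :=
  (x *m A *m x^T) 0 0.

(* x lies on the line spanned by a and b (affine cone: linear span). *)
Definition on_line (F : fieldType) (m : nat) (a b x : 'rV[F]_m) : Prop :=
  exists s t : F, x = s *: a + t *: b.

(* Main.v *)
Require Import Defs.
From HB Require Import structures.
From mathcomp Require Import all_boot all_order all_algebra all_field.
Import Order.TTheory GRing.Theory Num.Theory.
Local Open Scope ring_scope.

Section S.
Variables (F : fieldType) (m : nat) (A : 'M[F]_m).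
Definition Bf (u v : 'rV[F]_m) : F := (u *m A *m v^T) 0 0.
Lemma BfDl u v w : Bf (u + v) w = Bf u w + Bf v w.
Proof. by rewrite /Bf !mulmxDl mxE. Qed.
Lemma BfDr u v w : Bf u (v + w) = Bf u v + Bf u w.
Proof. by rewrite /Bf linearD /= mulmxDr mxE. Qed.
Lemma BfZl s u w : Bf (s *: u) w = s * Bf u w.
Proof. by rewrite /Bf -!scalemxAl mxE. Qed.
Lemma BfZr s u w : Bf u (s *: w) = s * Bf u w.
Proof. by rewrite /Bf linearZ /= -scalemxAr mxE. Qed.
Lemma BfNl u w : Bf (- u) w = - Bf u w.
Proof. by rewrite -scaleN1r BfZl mulN1r. Qed.
Lemma BfNr u w : Bf u (- w) = - Bf u w.
Proof. by rewrite -scaleN1r BfZr mulN1r. Qed.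
Lemma qformB u : qform A u = Bf u u. Proof. by []. Qed.

Lemma sum_zero (I : finType) (w : I -> 'rV[F]_m) (y : I -> F) :
  (forall i, Bf (w i) (w i) = 0) ->
  (forall i j, Bf (w i) (w j) + Bf (w j) (w i) = 0) ->
  Bf (\sum_i y i *: w i) (\sum_i y i *: w i) = 0.
Proof.
move=> H1 H2.
pose K := fun u => Bf u u = 0 /\ forall j, Bf u (w j) + Bf (w j) u = 0.
have Kid : K 0.
  by split; [|move=> j]; rewrite /Bf ?trmx0 ?mul0mx ?mulmx0 ?mxE ?addr0.
have Kop : forall i u, true -> K u -> K (y i *: w i + u).
  move=> i u _ [Hu Hj]; split.
    rewrite !(BfDl, BfDr, BfZl, BfZr) H1 Hu mulr0 !addr0.
    have := Hj i; rewrite addrC => /eqP; rewrite addr_eq0 => /eqP ->.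
    by rewrite -mulrDr add0r addNr mulr0.
  move=> j; rewrite !(BfDl, BfDr, BfZl, BfZr).
  have := Hj j; have := H2 i j.
  move=> h1 h2.
  by rewrite addrACA -mulrDr h1 mulr0 add0r h2.
by have [] := @big_rec _ K _ _ Kid I (index_enum I) (fun _ => true) (fun i => y i *: w i) Kop.
Qed.
End S.
Arguments Bf {F m} A u v.

Lemma dotvE (F : fieldType) m (x c : 'rV[F]_m) : dotv x c = (x *m c^T) 0 0.
Proof. by rewrite /dotv mxE; apply: eq_bigr => k _; rewrite mxE. Qed.

Lemma dotvD (F : fieldType) m (x y c : 'rV[F]_m) : dotv (x + y) c = dotv x c + dotv y c.
Proof. by rewrite !dotvE mulmxDl mxE. Qed.
Lemma dotvZ (F : fieldType) m s (x c : 'rV[F]_m) : dotv (s *: x) c = s * dotv x c.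
Proof. by rewrite !dotvE -scalemxAl mxE. Qed.
Lemma dotvN (F : fieldType) m (x c : 'rV[F]_m) : dotv (- x) c = - dotv x c.
Proof. by rewrite -scaleN1r dotvZ mulN1r. Qed.

Lemma dotv0 (F : fieldType) m (c : 'rV[F]_m) : dotv 0 c = 0.
Proof. by rewrite dotvE mul0mx mxE. Qed.
Lemma dotv_sum (F : fieldType) m (I : finType) (f : I -> 'rV[F]_m) c :
  dotv (\sum_i f i) c = \sum_i dotv (f i) c.
Proof. by elim/big_rec2: _ => [|i u v _ <-]; rewrite ?dotv0 ?dotvD. Qed.

Theorem lemma2 (F : closedFieldType) (n : nat)
  (a : 'I_n.+1 -> 'rV[F]_n.+1) (c : 'rV[F]_n.+1) :
  (2 <= n)%N ->
  row_free (\matrix_(i < n.+1) a i) ->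
  c != 0 ->
  (forall i, dotv (a i) c != 0) ->
  forall A : 'M[F]_n.+1,
    (forall (i j : 'I_n.+1) (x : 'rV[F]_n.+1),
        (i < j)%N -> on_line (a i) (a j) x -> dotv x c = 0 -> qform A x = 0) ->
    forall x : 'rV[F]_n.+1, dotv x c = 0 -> qform A x = 0.
Proof.
move=> _ Hfree _ Hd A HA x Hx.
set M := \matrix_(i < n.+1) a i.
set d := fun i => dotv (a i) c.
set b := fun i => (d i)^-1 *: a i.
have Hb : forall i j : 'I_n.+1, Bf A (b i - b j) (b i - b j) = 0.
  have H0 : forall i j : 'I_n.+1, (i < j)%N -> Bf A (b i - b j) (b i - b j) = 0.
    move=> i j lij; apply: (HA i j) => //.
      by exists (d i)^-1, (- (d j)^-1); rewrite scaleNr.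
    rewrite dotvD dotvN /b !dotvZ -/(d i) -/(d j).
    by rewrite !mulVf ?subrr // /d; apply: Hd.
  move=> i j; case: (ltngtP i j) => h; first exact: H0.
    by rewrite -opprB BfNl BfNr opprK; apply: H0.
  by move/val_inj: h => ->; rewrite subrr /Bf !mul0mx mxE.
set w := fun i => b i - b ord0.
have Hunit : M \in unitmx by rewrite -row_free_unit.
set t := x *m invmx M.
have Hxt : x = t *m M by rewrite /t mulmxKV.
set y := fun i => t 0 i * d i.
have Hsum : \sum_i y i = 0.
  rewrite -[RHS]Hx Hxt mulmx_sum_row dotv_sum.
  by apply: eq_bigr => i _; rewrite dotvZ /y /d rowK.
have Hxw : x = \sum_i y i *: w i.
  rewrite /w; under eq_bigr => i _ do rewrite scalerBr.
  rewrite sumrB -scaler_suml Hsum scale0r subr0 Hxt mulmx_sum_row.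
  apply: eq_bigr => i _; rewrite rowK /y /b scalerA -mulrA mulfV ?mulr1 //; exact: Hd.
have Hw0 : forall i, Bf A (w i) (w i) = 0 by move=> i; rewrite /w Hb.
have Hw : forall i j, Bf A (w i - w j) (w i - w j) = 0.
  by move=> i j; rewrite /w opprB addrA subrK Hb.
clearbody w.
rewrite qformB Hxw; apply: sum_zero => // i j.
have := Hw i j; rewrite !(BfDl, BfDr, BfNl, BfNr) !Hw0 opprK add0r addr0 -opprD.
by move=> /eqP; rewrite oppr_eq0 => /eqP.
Qed.
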